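(* Let $(G,\cdot)$ be a group and let $\psi\in\operatorname{End}(G,\cdot)$. Consider the subset $$N=\{\,\nu(g):g\in G\,\},\qquad \nu(g)\colon h\mapsto g\cdot\psi(g)\cdot h\cdot\psi(g)^{-1},$$ of $\operatorname{Perm}(G)$, and define $g\circ h=g\cdot\psi(g)\cdot h\cdot\psi(g)^{-1}$ for $g,h\in G$. (1) The following are equivalent: (a) $N$ is a subgroup of $\operatorname{Perm}(G)$; (b) $N$ is a regular subgroup of $\operatorname{Perm}(G)$ which normalises $\lambda(G)$; (c) $\psi([\psi(G),G])\le Z(G,\cdot)$; (d) $(G,\cdot,\circ)$ is a skew brace. (2) The following are equivalent: (a) $N$ is a regular subgroup of $\operatorname{Perm}(G)$ which normalises, and is normalised by, $\lambda(G)$; (b) $\psi([G,G])\le Z(G,\cdot)$; (c) $(G,\cdot,\circ)$ is a bi-skew brace.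
   Context: $\operatorname{Perm}(G)$ denotes the group of all permutations of the underlying set of $G$, and $\lambda\colon G\to\operatorname{Perm}(G)$, $\lambda(g)(h)=g\cdot h$, is the left regular representation. A subset $N\subseteq\operatorname{Perm}(G)$ is regular if the map $N\to G$, $\eta\mapsto\eta(1)$, is a bijection. ''$N$ normalises $\lambda(G)$'' means $\eta\lambda(G)\eta^{-1}=\lambda(G)$ for all $\eta\in N$; ''$N$ is normalised by $\lambda(G)$'' means $\lambda(g)N\lambda(g)^{-1}=N$ for all $g\in G$. Commutators are $[x,y]=xyx^{-1}y^{-1}$, and for subgroups $A,B$, $[A,B]$ is the subgroup generated by all $[a,b]$, $a\in A,b\in B$; $\psi(G)$ is the image of $\psi$. $Z(G,\cdot)$ is the centre. A skew (left) brace is a triple $(G,\cdot,\circ)$ where $(G,\cdot)$ and $(G,\circ)$ are groups and $g\circ(h\cdot k)=(g\circ h)\cdot g^{-1}\cdot(g\circ k)$ for all $g,h,k$ (with $g^{-1}$ the inverse in $(G,\cdot)$). A bi-skew brace is a triple $(G,\cdot,\circ)$ such that both $(G,\cdot,\circ)$ and $(G,\circ,\cdot)$ are skew braces. *)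

(* Defs.v *)
Set Implicit Arguments.

Section Defs.
Variable G : Type.

Definition is_group (op : G -> G -> G) (e : G) (i : G -> G) : Prop :=
  (forall x y z, op x (op y z) = op (op x y) z) /\
  (forall x, op e x = x /\ op x e = x) /\
  (forall x, op x (i x) = e /\ op (i x) x = e).

Definition is_skew_brace (dot circ : G -> G -> G) : Prop :=
  exists (e : G) (i : G -> G) (e' : G) (i' : G -> G),
    is_group dot e i /\ is_group circ e' i' /\
    (forall g h k, circ g (dot h k) = dot (dot (circ g h) (i g)) (circ g k)).

Definition is_bi_skew_brace (dot circ : G -> G -> G) : Prop :=
  is_skew_brace dot circ /\ is_skew_brace circ dot.

Definition bijective_fun (f : G -> G) : Prop :=
  exists f' : G -> G, (forall x, f' (f x) = x) /\ (forall x, f (f' x) = x).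

Definition is_inverse_fun (f f' : G -> G) : Prop :=
  (forall x, f' (f x) = x) /\ (forall x, f (f' x) = x).

Definition is_perm_subgroup (S : (G -> G) -> Prop) : Prop :=
  (forall f, S f -> bijective_fun f) /\
  S (fun x => x) /\
  (forall f g, S f -> S g -> S (fun x => f (g x))) /\
  (forall f, S f -> forall f', is_inverse_fun f f' -> S f').

(* S is regular: eta |-> eta(1) is a bijection S -> G. *)
Definition is_regular (one : G) (S : (G -> G) -> Prop) : Prop :=
  (forall f g, S f -> S g -> f one = g one -> f = g) /\
  (forall x, exists f, S f /\ f one = x).

Definition lam (mul : G -> G -> G) (g : G) : G -> G := fun h => mul g h.

Definition normalises_lambda (mul : G -> G -> G) (S : (G -> G) -> Prop) : Prop :=
  forall eta, S eta -> forall eta', is_inverse_fun eta eta' ->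
    (forall g, exists g', (fun x => eta (lam mul g (eta' x))) = lam mul g') /\
    (forall g', exists g, (fun x => eta (lam mul g (eta' x))) = lam mul g').

Definition normalised_by_lambda (mul : G -> G -> G) (inv : G -> G)
    (S : (G -> G) -> Prop) : Prop :=
  forall g,
    (forall eta, S eta -> S (fun x => lam mul g (eta (lam mul (inv g) x)))) /\
    (forall eta', S eta' -> exists eta, S eta /\
        eta' = (fun x => lam mul g (eta (lam mul (inv g) x)))).

Inductive gen (mul : G -> G -> G) (one : G) (inv : G -> G) (T : G -> Prop)
  : G -> Prop :=
| gen_one : gen mul one inv T one
| gen_in : forall x, T x -> gen mul one inv T x
| gen_inv : forall x, gen mul one inv T x -> gen mul one inv T (inv x)
| gen_mul : forall x y, gen mul one inv T x -> gen mul one inv T y ->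
            gen mul one inv T (mul x y).

Definition commutator (mul : G -> G -> G) (inv : G -> G) (x y : G) : G :=
  mul (mul (mul x y) (inv x)) (inv y).

Definition comm_subgroup (mul : G -> G -> G) (one : G) (inv : G -> G)
    (A B : G -> Prop) : G -> Prop :=
  gen mul one inv (fun z => exists a b, A a /\ B b /\ z = commutator mul inv a b).

Definition center (mul : G -> G -> G) : G -> Prop :=
  fun z => forall y, mul z y = mul y z.

Definition is_endo (mul : G -> G -> G) (psi : G -> G) : Prop :=
  forall x y, psi (mul x y) = mul (psi x) (psi y).

Definition nu (mul : G -> G -> G) (inv : G -> G) (psi : G -> G) (g : G) : G -> G :=
  fun h => mul (mul (mul g (psi g)) h) (inv (psi g)).

Definition Nset (mul : G -> G -> G) (inv : G -> G) (psi : G -> G) : (G -> G) -> Prop :=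
  fun f => exists g, f = nu mul inv psi g.

Definition circ_op (mul : G -> G -> G) (inv : G -> G) (psi : G -> G) : G -> G -> G :=
  fun g h => nu mul inv psi g h.

End Defs.

(* Main.v *)
Require Import Defs.
From Stdlib Require Import FunctionalExtensionality Setoid.

Section S.
Variable G : Type.
Variable mul : G -> G -> G.
Variable one : G.
Variable inv : G -> G.
Hypothesis HG : is_group mul one inv.
Variable psi : G -> G.
Hypothesis Hpsi : is_endo mul psi.

Local Notation "x ** y" := (mul x y) (at level 40, left associativity).

Lemma mulA_r x y z : (x ** y) ** z = x ** (y ** z).
Proof. destruct HG as [A _]. now rewrite A. Qed.
Lemma one_l x : one ** x = x.
Proof. destruct HG as [_ [I _]]. apply I. Qed.
Lemma one_r x : x ** one = x.
Proof. destruct HG as [_ [I _]]. apply I. Qed.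
Lemma inv_r x : x ** inv x = one.
Proof. destruct HG as [_ [_ I]]. apply I. Qed.
Lemma inv_l x : inv x ** x = one.
Proof. destruct HG as [_ [_ I]]. apply I. Qed.
Lemma inv_r' x y : x ** (inv x ** y) = y.
Proof. now rewrite <- mulA_r, inv_r, one_l. Qed.
Lemma inv_l' x y : inv x ** (x ** y) = y.
Proof. now rewrite <- mulA_r, inv_l, one_l. Qed.
Lemma lcancel a x y : a ** x = a ** y -> x = y.
Proof. intro H. rewrite <- (inv_l' a x), H. apply inv_l'. Qed.
Lemma inv_uniq x y : x ** y = one -> y = inv x.
Proof. intro H. apply (lcancel x). now rewrite H, inv_r. Qed.
Lemma inv_mul x y : inv (x ** y) = inv y ** inv x.
Proof. symmetry. apply inv_uniq. now rewrite mulA_r, inv_r', inv_r. Qed.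
Lemma inv_inv x : inv (inv x) = x.
Proof. symmetry. apply inv_uniq. apply inv_l. Qed.
Lemma inv_one : inv one = one.
Proof. symmetry. apply inv_uniq. apply one_l. Qed.
Lemma psi_mul x y : psi (x ** y) = psi x ** psi y.
Proof. apply Hpsi. Qed.
Lemma psi_one : psi one = one.
Proof. apply (lcancel (psi one)). now rewrite <- psi_mul, !one_r. Qed.
Lemma psi_inv x : psi (inv x) = inv (psi x).
Proof. apply inv_uniq. now rewrite <- psi_mul, inv_r, psi_one. Qed.

Definition cj a x := a ** x ** inv a.
Definition nuinv g x := cj (inv (psi g)) (inv g ** x).

Ltac gn := repeat (unfold cj, nuinv, nu, commutator, lam in *);
  repeat (rewrite ?mulA_r, ?one_l, ?one_r, ?inv_r, ?inv_l, ?inv_r', ?inv_l',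
     ?inv_mul, ?inv_inv, ?inv_one, ?psi_mul, ?psi_one, ?psi_inv).

Local Notation nuu := (nu mul inv psi).
Local Notation N := (Nset mul inv psi).

Lemma nu_cj g x : nuu g x = g ** cj (psi g) x.
Proof. gn. reflexivity. Qed.
Lemma nu_one_r g : nuu g one = g.
Proof. gn. reflexivity. Qed.
Lemma nu_one_l x : nuu one x = x.
Proof. gn. reflexivity. Qed.
Lemma nu_nuinv g x : nuu g (nuinv g x) = x.
Proof. gn. reflexivity. Qed.
Lemma nuinv_nu g x : nuinv g (nuu g x) = x.
Proof. gn. reflexivity. Qed.
Lemma inv_fun_eq g f' : is_inverse_fun (nuu g) f' -> forall x, f' x = nuinv g x.
Proof. intros [H1 H2] x. rewrite <- (nu_nuinv g x) at 1. apply H1. Qed.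
Lemma nu_inj g x y : nuu g x = nuu g y -> x = y.
Proof. intro H. rewrite <- (nuinv_nu g x), H. apply nuinv_nu. Qed.

Lemma cj_cj a b x : cj a (cj b x) = cj (a ** b) x.
Proof. gn. reflexivity. Qed.
Lemma cj_mul a x y : cj a (x ** y) = cj a x ** cj a y.
Proof. gn. reflexivity. Qed.

Lemma center_one : center mul one.
Proof. intro y. gn. reflexivity. Qed.
Lemma center_inv z : center mul z -> center mul (inv z).
Proof. intros H y. apply (lcancel z). rewrite <- mulA_r, inv_r, one_l.
  rewrite <- mulA_r, H, mulA_r, inv_r, one_r. reflexivity. Qed.
Lemma center_mul a b : center mul a -> center mul b -> center mul (a ** b).
Proof. intros Ha Hb y. rewrite mulA_r, Hb, <- mulA_r, Ha, mulA_r. reflexivity. Qed.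
Lemma center_cj z x : center mul z -> cj z x = x.
Proof. intro H. unfold cj. rewrite H. gn. reflexivity. Qed.
Lemma cj_id_center z : (forall x, cj z x = x) -> center mul z.
Proof. intros H y. rewrite <- (H y) at 2. unfold cj. gn. reflexivity. Qed.

Lemma cj_eq_center a b : (forall x, cj a x = cj b x) <-> center mul (inv b ** a).
Proof. split.
- intro H. apply cj_id_center. intro x. rewrite <- cj_cj, H, cj_cj. gn. reflexivity.
- intros H x. replace a with (b ** (inv b ** a)) by (gn; reflexivity).
  rewrite <- cj_cj, (center_cj (inv b ** a) x H). reflexivity.
Qed.

Lemma center_conj a z : center mul z -> center mul (cj a z).
Proof. intro H. replace (cj a z) with z. exact H. unfold cj. rewrite <- (H a). gn. reflexivity. Qed.
Lemma center_conj' a z : center mul (cj a z) -> center mul z.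
Proof. intro H. replace z with (cj (inv a) (cj a z)) by (gn; reflexivity).
  apply center_conj, H. Qed.

Definition Cond1 := forall g h, center mul (psi (commutator mul inv (psi g) h)).
Definition Cond2 := forall g h, center mul (psi (commutator mul inv g h)).
Definition Assoc := forall g h x, nuu g (nuu h x) = nuu (nuu g h) x.

Lemma psi_cj a x : psi (cj a x) = cj (psi a) (psi x).
Proof. gn. reflexivity. Qed.

Lemma assoc_iff_aux g h : (forall x, nuu g (nuu h x) = nuu (nuu g h) x) <->
   (forall x, cj (psi (nuu g h)) x = cj (psi g ** psi h) x).
Proof.
  assert (E : forall x, nuu g (nuu h x) = nuu g h ** cj (psi g ** psi h) x)
    by (intro; gn; reflexivity).
  split; intros H x.
  - apply (lcancel (nuu g h)). rewrite <- nu_cj, <- H. rewrite E. reflexivity.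
  - rewrite E, (nu_cj (nuu g h) x), H. reflexivity.
Qed.

Lemma cond1_iff : Cond1 <-> Assoc.
Proof.
  unfold Cond1, Assoc. split.
  - intros H g h. apply assoc_iff_aux. apply cj_eq_center.
    replace (inv (psi g ** psi h) ** psi (nuu g h)) with (cj (inv (psi h)) (psi (commutator mul inv (psi g) h)))
      by (gn; reflexivity). apply center_conj, H.
  - intros H g h. pose proof (proj1 (assoc_iff_aux g h) (H g h)) as E.
    apply cj_eq_center in E.
    replace (inv (psi g ** psi h) ** psi (nuu g h)) with (cj (inv (psi h)) (psi (commutator mul inv (psi g) h)))
      in E by (gn; reflexivity). exact (center_conj' _ _ E).
Qed.

Lemma nu_bij g : bijective_fun (nuu g).
Proof. exists (nuinv g). split; intro x; [apply nuinv_nu | apply nu_nuinv]. Qed.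

Lemma sub_assoc : is_perm_subgroup N -> Assoc.
Proof.
  intros [_ [_ [Hc _]]] g h x.
  destruct (Hc (nuu g) (nuu h) (ex_intro _ g eq_refl) (ex_intro _ h eq_refl)) as [k Hk].
  assert (Ek : k = nuu g h).
  { rewrite <- (nu_one_r k), <- Hk, nu_one_r. reflexivity. }
  subst k. exact (equal_f Hk x).
Qed.

Lemma assoc_sub : Assoc -> is_perm_subgroup N.
Proof.
  intro HA. split; [|split; [|split]].
  - intros f [g ->]. apply nu_bij.
  - exists one. extensionality x. symmetry. apply nu_one_l.
  - intros f g [a ->] [b ->]. exists (nuu a b). extensionality x. apply HA.
  - intros f [g ->] f' Hf'. exists (nuinv g one). extensionality x.
    rewrite (inv_fun_eq g f' Hf' x).
    assert (E : nuu g (nuu (nuinv g one) x) = x).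
    { rewrite HA, nu_nuinv. apply nu_one_l. }
    rewrite <- E at 1. apply nuinv_nu.
Qed.

Lemma regular_N : is_regular one N.
Proof. split.
  - intros f g [a ->] [b ->]. rewrite !nu_one_r. intros ->. reflexivity.
  - intro x. exists (nuu x). split. exists x; reflexivity. apply nu_one_r.
Qed.

Lemma normalises_N : normalises_lambda mul N.
Proof.
  intros eta [k ->] eta' Heta. split.
  - intro g. exists (k ** cj (psi k) g ** inv k). extensionality x.
    rewrite (inv_fun_eq k eta' Heta). gn. reflexivity.
  - intro g'. exists (cj (inv (psi k)) (inv k ** g' ** k)). extensionality x.
    rewrite (inv_fun_eq k eta' Heta). gn. reflexivity.
Qed.

Lemma gen_center (T : G -> Prop) : (forall z, T z -> center mul (psi z)) ->
  forall x, gen mul one inv T x -> center mul (psi x).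
Proof.
  intros HT x Hx. induction Hx.
  - rewrite psi_one. apply center_one.
  - apply HT, H.
  - rewrite psi_inv. apply center_inv, IHHx.
  - rewrite psi_mul. apply center_mul; assumption.
Qed.

Lemma cond1_comm : Cond1 <-> (forall x, comm_subgroup mul one inv (fun x => exists g, x = psi g)
    (fun _ => True) x -> center mul (psi x)).
Proof. split.
  - intro H. apply gen_center. intros z [a [b [[g ->] [_ ->]]]]. apply H.
  - intros H g h. apply H. apply gen_in. exists (psi g), h. split; [exists g; reflexivity|].
    split; [exact I | reflexivity].
Qed.

Lemma cond2_comm : Cond2 <-> (forall x, comm_subgroup mul one inv (fun _ => True)
    (fun _ => True) x -> center mul (psi x)).
Proof. split.
  - intro H. apply gen_center. intros z [a [b [_ [_ ->]]]]. apply H.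
  - intros H g h. apply H. apply gen_in. exists g, h. repeat split.
Qed.

Lemma cond2_cond1 : Cond2 -> Cond1.
Proof. intros H g h. apply H. Qed.

Lemma circ_group : Assoc -> is_group (circ_op mul inv psi) one (fun g => nuinv g one).
Proof.
  intro HA. unfold circ_op. split; [|split].
  - intros. apply HA.
  - intro x. split; [apply nu_one_l | apply nu_one_r].
  - intro g. split; [apply nu_nuinv|].
    apply (nu_inj g). rewrite HA, nu_nuinv, nu_one_l, nu_one_r. reflexivity.
Qed.

Lemma skew_iff : Assoc <-> is_skew_brace mul (circ_op mul inv psi).
Proof. split.
  - intro HA. exists one, inv, one, (fun g => nuinv g one). split; [exact HG|].
    split; [apply circ_group, HA|].
    intros g h k. unfold circ_op. gn. reflexivity.
  - intros [e [i [e' [i' [_ [[A _] _]]]]]] g h x. unfold circ_op in A. apply A.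
Qed.

Lemma nbl_key g k : (forall x, g ** nuu k (inv g ** x) = nuu (g ** nuu k (inv g)) x) <->
  center mul (psi (commutator mul inv (inv k) g ** commutator mul inv g (psi k))).
Proof.
  set (m := g ** nuu k (inv g)).
  assert (E : forall x, g ** nuu k (inv g ** x) = m ** cj (psi k) x)
    by (intro; unfold m; gn; reflexivity).
  replace (psi (commutator mul inv (inv k) g ** commutator mul inv g (psi k)))
    with (inv (psi k) ** psi m) by (unfold m; gn; reflexivity).
  rewrite <- cj_eq_center. split; intros H x.
  - apply (lcancel m). rewrite <- E, H, nu_cj. reflexivity.
  - rewrite E, nu_cj, H. reflexivity.
Qed.

Lemma nbl_iff : Cond1 -> (normalised_by_lambda mul inv N <-> Cond2).
Proof.
  intro H1. split.
  - intros HN g h.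
    destruct (proj1 (HN h) (nuu (inv g)) (ex_intro _ _ eq_refl)) as [m Hm].
    assert (Em : m = h ** nuu (inv g) (inv h)).
    { rewrite <- (nu_one_r m), <- Hm. unfold lam. rewrite one_r. reflexivity. }
    subst m. pose proof (proj1 (nbl_key h (inv g)) (fun x => equal_f Hm x)) as C.
    rewrite inv_inv in C.
    pose proof (H1 (inv g) h) as C1.
    replace (psi (commutator mul inv g h)) with
      (psi (commutator mul inv g h ** commutator mul inv h (psi (inv g))) **
       psi (commutator mul inv (psi (inv g)) h)) by (gn; reflexivity).
    apply center_mul; assumption.
  - intros H2 g. split.
    + intros eta [k ->]. exists (g ** nuu k (inv g)). extensionality x.
      unfold lam. apply nbl_key. rewrite psi_mul. apply center_mul; apply H2.
    + intros eta' [k ->].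
      assert (Hc : forall x, inv g ** nuu k (inv (inv g) ** x) = nuu (inv g ** nuu k (inv (inv g))) x).
      { apply nbl_key. rewrite psi_mul. apply center_mul; apply H2. }
      eexists. split. exists (inv g ** nuu k (inv (inv g))). reflexivity.
      extensionality x. unfold lam. rewrite <- Hc. gn. reflexivity.
Qed.

Lemma biskew_key g gb h k : Assoc -> nuu g gb = one -> nuu gb g = one ->
  nuu (nuu (g ** h) gb) (g ** k) = g ** (h ** cj (psi g ** psi h ** inv (psi g)) k).
Proof.
  intros HA E1 E2.
  assert (Cg : forall y, cj (psi gb) y = cj (inv (psi g)) y).
  { intro y. pose proof (proj1 (assoc_iff_aux gb g) (HA gb g)) as C.
    rewrite E2, psi_one in C.
    replace (cj (psi gb) y) with (cj (psi gb ** psi g) (cj (inv (psi g)) y))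
      by (rewrite <- cj_cj; gn; reflexivity).
    rewrite <- C. gn. reflexivity. }
  assert (Eb : gb = nuinv g one).
  { apply (nu_inj g). rewrite E1, nu_nuinv. reflexivity. }
  rewrite <- HA, (nu_cj gb (g ** k)), Cg. rewrite Eb. gn. reflexivity.
Qed.

Lemma nu_circ_inv g : Assoc -> nuu (nuinv g one) g = one.
Proof. intro HA. apply (circ_group HA). Qed.

Lemma biskew_iff : is_bi_skew_brace mul (circ_op mul inv psi) <-> Cond2.
Proof. split.
  - intros [S1 [e [i [e' [i' [Gc [_ Hid]]]]]]] g h.
    apply skew_iff in S1.
    assert (Ee : e = one).
    { destruct Gc as [_ [Hi _]]. rewrite <- (nu_one_r e). apply (proj1 (Hi one)). }
    subst e. destruct Gc as [_ [_ Hinv]]. destruct (Hinv g) as [I1 I2].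
    assert (C : forall k, cj (psi (inv h)) k = cj (psi g ** psi (inv h) ** inv (psi g)) k).
    { intro k. pose proof (Hid g (inv h) k) as Hk. unfold circ_op in Hk.
      rewrite (biskew_key g (i g) (inv h) k S1 I1 I2), nu_cj in Hk.
      apply lcancel in Hk. apply lcancel in Hk. exact Hk. }
    apply cj_eq_center in C.
    replace (psi (commutator mul inv g h)) with
      (inv (psi g ** psi (inv h) ** inv (psi g)) ** psi (inv h)) by (gn; reflexivity).
    exact C.
  - intro H2. assert (HA : Assoc) by (apply cond1_iff, cond2_cond1, H2).
    split; [apply skew_iff, HA|].
    exists one, (fun g => nuinv g one), one, inv. split; [apply circ_group, HA|].
    split; [exact HG|].
    intros g h k. unfold circ_op.
    rewrite (biskew_key g (nuinv g one) h k HA (nu_nuinv g one) (nu_circ_inv g HA)), nu_cj.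
    f_equal. f_equal. apply cj_eq_center.
    replace (inv (psi g ** psi h ** inv (psi g)) ** psi h) with
      (psi (commutator mul inv g (inv h))) by (gn; reflexivity). apply H2.
Qed.

Lemma main_sec :
  let N := Nset mul inv psi in
  let circ := circ_op mul inv psi in
  let psiG := fun x => exists g, x = psi g in
  let allG := fun _ : G => True in
  ((is_perm_subgroup N <->
      (is_perm_subgroup N /\ is_regular one N /\ normalises_lambda mul N)) /\
   (is_perm_subgroup N <->
      (forall x, comm_subgroup mul one inv psiG allG x -> center mul (psi x))) /\
   (is_perm_subgroup N <-> is_skew_brace mul circ)) /\
  (((is_perm_subgroup N /\ is_regular one N /\ normalises_lambda mul N /\
       normalised_by_lambda mul inv N) <->
      (forall x, comm_subgroup mul one inv allG allG x -> center mul (psi x))) /\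
   ((is_perm_subgroup N /\ is_regular one N /\ normalises_lambda mul N /\
       normalised_by_lambda mul inv N) <-> is_bi_skew_brace mul circ)).
Proof.
  intros N circ psiG allG.
  assert (S1 : is_perm_subgroup N <-> Cond1).
  { split; intro H. apply cond1_iff, sub_assoc, H. apply assoc_sub, cond1_iff, H. }
  assert (S2 : (is_perm_subgroup N /\ is_regular one N /\ normalises_lambda mul N /\
       normalised_by_lambda mul inv N) <-> Cond2).
  { split.
    - intros [H [_ [_ H']]]. apply (nbl_iff (proj1 S1 H)), H'.
    - intro H. assert (H1 : Cond1) by (apply cond2_cond1, H).
      split; [apply S1, H1|]. split; [apply regular_N|]. split; [apply normalises_N|].
      apply (nbl_iff H1), H. }
  split; [split; [|split]|split].
  - split; [intro H; split; [exact H | split; [apply regular_N | apply normalises_N]] | tauto].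
  - rewrite S1. apply cond1_comm.
  - rewrite S1, cond1_iff. apply skew_iff.
  - rewrite S2. apply cond2_comm.
  - rewrite S2. symmetry. apply biskew_iff.
Qed.
End S.

Theorem theorem1p2 (G : Type) (mul : G -> G -> G) (one : G) (inv : G -> G)
  (HG : is_group mul one inv) (psi : G -> G) (Hpsi : is_endo mul psi) :
  let N := Nset mul inv psi in
  let circ := circ_op mul inv psi in
  let psiG := fun x => exists g, x = psi g in
  let allG := fun _ : G => True in
  (* part (1) *)
  ((is_perm_subgroup N <->
      (is_perm_subgroup N /\ is_regular one N /\ normalises_lambda mul N)) /\
   (is_perm_subgroup N <->
      (forall x, comm_subgroup mul one inv psiG allG x -> center mul (psi x))) /\
   (is_perm_subgroup N <-> is_skew_brace mul circ)) /\
  (* part (2) *)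
  (((is_perm_subgroup N /\ is_regular one N /\ normalises_lambda mul N /\
       normalised_by_lambda mul inv N) <->
      (forall x, comm_subgroup mul one inv allG allG x -> center mul (psi x))) /\
   ((is_perm_subgroup N /\ is_regular one N /\ normalises_lambda mul N /\
       normalised_by_lambda mul inv N) <-> is_bi_skew_brace mul circ)).
Proof. exact (main_sec G mul one inv HG psi Hpsi). Qed.
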